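(* For all $a, b \in \mathbb{N}$, $R_\mathrm{ord}(K_a, S_b^\mathrm{sc}) = 1 + (a-1)(b-1)$.
   Context: All graphs are finite, simple and undirected, and a graph of order $n$ has vertex set $\{0,1,\ldots,n-1\}$; $K_n$ is the complete graph on $\{0,\ldots,n-1\}$. A $2$-edge-coloring of $K_n$ assigns each edge a color in $\{1,2\}$. For a graph $H$ and such a coloring, an embedding of $H$ in color $j$ is an injective map $\varphi\colon V(H)\to V(K_n)$ such that for every edge $uv$ of $H$ the edge $\{\varphi(u),\varphi(v)\}$ has color $j$; it is increasing if $\varphi(0)<\cdots<\varphi(|H|-1)$. The ordered Ramsey number $R_\mathrm{ord}(H_1,H_2)$ is the smallest $n$ such that every $2$-edge-coloring of $K_n$ admits an increasing embedding of $H_1$ in color $1$ or an increasing embedding of $H_2$ in color $2$. The start-central star $S_n^\mathrm{sc}$ is the graph of order $n$ whose edges are exactly $\{0,v\}$ for $1\le v\le n-1$. *)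

(* Defs.v *)
From mathcomp Require Import all_boot.
Set Implicit Arguments. Unset Strict Implicit. Unset Printing Implicit Defensive.

Record graph := Graph {
  gorder : nat;
  gedge : rel 'I_gorder;
  gedge_sym : forall u v, gedge u v = gedge v u;
  gedge_irr : forall u, gedge u u = false }.

Definition Kn_edge (n : nat) : rel 'I_n := fun u v => u != v.
Lemma Kn_sym n (u v : 'I_n) : Kn_edge u v = Kn_edge v u.
Proof. by rewrite /Kn_edge eq_sym. Qed.
Lemma Kn_irr n (u : 'I_n) : Kn_edge u u = false.
Proof. by rewrite /Kn_edge eqxx. Qed.
Definition K_ (n : nat) : graph := Graph (@Kn_sym n) (@Kn_irr n).

Definition Ssc_edge (n : nat) : rel 'I_n :=
  fun u v => ((val u == 0) && (val v != 0)) || ((val v == 0) && (val u != 0)).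
Lemma Ssc_sym n (u v : 'I_n) : Ssc_edge u v = Ssc_edge v u.
Proof. by rewrite /Ssc_edge orbC. Qed.
Lemma Ssc_irr n (u : 'I_n) : Ssc_edge u u = false.
Proof. by rewrite /Ssc_edge; case: (val u == 0). Qed.
Definition S_sc (n : nat) : graph := Graph (@Ssc_sym n) (@Ssc_irr n).

(* A 2-edge-coloring of K_n: each edge {i,j} (i <> j) gets color c i j in {1,2};
   c is symmetric, so it is a function of the unordered edge. *)
Definition two_coloring (n : nat) (c : 'I_n -> 'I_n -> nat) : Prop :=
  (forall i j, c i j = c j i) /\ (forall i j, i != j -> c i j = 1 \/ c i j = 2).

Arguments two_coloring {n} c.

Definition incr_embedding (n : nat) (c : 'I_n -> 'I_n -> nat) (H : graph) (j : nat)
  (phi : 'I_(gorder H) -> 'I_n) : Prop :=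
  (forall u v : 'I_(gorder H), u < v -> phi u < phi v) /\
  (forall u v : 'I_(gorder H), @gedge H u v -> c (phi u) (phi v) = j).

Arguments incr_embedding {n} c H j phi.

Definition ord_ramsey_prop (H1 H2 : graph) (n : nat) : Prop :=
  forall c : 'I_n -> 'I_n -> nat, two_coloring c ->
    (exists phi, incr_embedding c H1 1 phi) \/ (exists phi, incr_embedding c H2 2 phi).

Definition is_R_ord (H1 H2 : graph) (N : nat) : Prop :=
  ord_ramsey_prop H1 H2 N /\ (forall n, n < N -> ~ ord_ramsey_prop H1 H2 n).

(* Main.v *)
Require Import Defs.
From mathcomp Require Import all_boot.
From mathcomp Require Import zify.

Definition ltI (n : nat) : rel 'I_n := fun x y => val x < val y.

Lemma ltI_trans n : transitive (@ltI n).
Proof. move=> y x z; exact: ltn_trans. Qed.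

Lemma ltI_irr n : irreflexive (@ltI n).
Proof. move=> x; exact: ltnn. Qed.

Lemma up_seq (n b : nat) (c : 'I_n -> 'I_n -> nat) : two_coloring c -> 1 <= b ->
  forall a s, sorted (@ltI n) s -> 1 + (a-1)*(b-1) <= size s -> 1 <= a ->
  (exists t, [/\ sorted (@ltI n) t, size t = a, {subset t <= s} &
     forall x y, x \in t -> y \in t -> x != y -> c x y = 1]) \/
  (exists (v : 'I_n) w, [/\ sorted (@ltI n) w, size w = b - 1 &
     forall x, x \in w -> v < x /\ c v x = 2]).
Proof.
move=> [csym c12] Hb a; elim: a => [//|a IH] s Ss Hsz _.
case: s Ss Hsz => [|v s'] Ss Hsz; first by move: Hsz; rewrite add1n.
have /andP[Hall Ss'] : all (ltI n v) s' && sorted (@ltI n) s'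
  by rewrite -path_sortedE //; exact: ltI_trans.
case: (posnP a) => [a0|apos].
  subst a; left; exists [:: v]; split => //.
    by move=> x; rewrite inE => /eqP->; rewrite inE eqxx.
  by move=> x y; rewrite !inE => /eqP-> /eqP->; rewrite eqxx.
set s2 := filter (fun x => c v x != 1) s'.
set s1 := filter (fun x => c v x == 1) s'.
have memv : forall x, x \in s' -> v < x by move=> x xs; exact: (allP Hall x xs).
case: (leqP (b-1) (size s2)) => H2.
  right; exists v, (take (b-1) s2); split.
  - apply: (subseq_sorted (@ltI_trans n) (take_subseq _ _)).
    exact: (sorted_filter (@ltI_trans n)).
  - by rewrite size_takel.
  - move=> x /mem_take; rewrite mem_filter => /andP[cx xs].
    split; first exact: memv.
    have vx : v != x by rewrite neq_ltn memv.
    by case: (c12 _ _ vx) => // e; rewrite e in cx.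
have Hs12 : size s1 + size s2 = size s'.
  by rewrite /s1 /s2 !size_filter; exact: count_predC.
have Ss1 : sorted (@ltI n) s1 by exact: (sorted_filter (@ltI_trans n)).
have : 1 + (a - 1) * (b - 1) <= size s1.
  rewrite /= in Hsz; rewrite subSS subn0 in Hsz.
  move: Hsz Hs12 H2; rewrite mulnBl mul1n.
  have : b - 1 <= a * (b - 1) by rewrite leq_pmull.
  lia.
move=> /(IH _ Ss1) /(_ apos) [[t [St szt sub cl]]|R]; last by right.
left; exists (v :: t); split.
- rewrite /= path_sortedE; last exact: ltI_trans.
  rewrite St andbT; apply/allP => x /sub; rewrite mem_filter => /andP[_ xs].
  exact: memv.
- by rewrite /= szt.
- move=> x; rewrite !inE => /orP[->//|/sub]; rewrite mem_filter => /andP[_ ->].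
  by rewrite orbT.
- have cv : forall y, y \in t -> c v y = 1.
    by move=> y /sub; rewrite mem_filter => /andP[/eqP].
  move=> x y; rewrite !inE => /orP[/eqP->|xt] /orP[/eqP->|yt].
  + by rewrite eqxx.
  + by move=> _; exact: cv.
  + by move=> _; rewrite csym; exact: cv.
  + exact: cl.
Qed.

Lemma lower (a b m : nat) : 1 <= a -> 1 <= b -> m <= (a - 1) * (b - 1) ->
  ~ ord_ramsey_prop (K_ a) (S_sc b) m.
Proof.
move=> a1 b1 Hm Hp.
case: (posnP m) => [m0|mpos].
  subst m; case: (Hp (fun _ _ => 1)).
  - by split => // i j _; left.
  - by move=> [phi _]; case: (phi (Ordinal a1)).
  - by move=> [phi _]; case: (phi (Ordinal b1)).
have b2 : 0 < b - 1 by move: Hm mpos; case: (b - 1) => //; rewrite muln0; lia.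
set c := fun i j : 'I_m => if i %/ (b - 1) == j %/ (b - 1) then 2 else 1.
have hc : two_coloring c.
  split; first by move=> i j; rewrite /c eq_sym.
  by move=> i j _; rewrite /c; case: ifP; [right|left].
case: (Hp c hc).
- move=> [phi [inc edg]].
  have Hlt : forall u, phi u %/ (b - 1) < a - 1.
    by move=> u; rewrite ltn_divLR //; apply: (leq_trans (ltn_ord _)).
  pose g u := Ordinal (Hlt u).
  have ginj : injective g.
    move=> u v /(congr1 val) /= e; apply/eqP; apply: contraT => uv.
    by have := edg u v uv; rewrite /c e eqxx.
  have := leq_card _ ginj; rewrite !card_ord /=; lia.
- move=> [phi [inc edg]].
  pose g u := Ordinal (ltn_pmod (phi u) b2).
  have q0 : forall u : 'I_b, phi u %/ (b - 1) = phi (Ordinal b1) %/ (b - 1).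
    move=> u; case: (posnP u) => [u0|upos].
      by congr (phi _ %/ _); apply: val_inj.
    have : Ssc_edge (Ordinal b1) u by rewrite /Ssc_edge /= -lt0n upos.
    move/edg; rewrite /c; case: ifP => // /eqP -> //.
  have ginj : injective g.
    move=> u v /(congr1 val) /= e.
    have ev : nat_of_ord (phi u) = nat_of_ord (phi v).
      by rewrite (divn_eq (phi u) (b - 1)) (divn_eq (phi v) (b - 1)) e !q0.
    case: (ltngtP u v) => [uv|vu|/val_inj //].
    + by have := inc _ _ uv; rewrite ev ltnn.
    + by have := inc _ _ vu; rewrite ev ltnn.
  have := leq_card _ ginj; rewrite !card_ord /=; lia.
Qed.

Theorem theorem4p24 (a b : nat) : 1 <= a -> 1 <= b ->
  is_R_ord (K_ a) (S_sc b) (1 + (a - 1) * (b - 1)).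
Proof.
move=> a1 b1; split; last first.
  by move=> m Hm; apply: lower => //; move: Hm; rewrite add1n ltnS.
set N := 1 + (a - 1) * (b - 1).
move=> c hc.
have x0 : 'I_N by apply: (@Ordinal N 0); rewrite /N add1n.
have Ss : sorted (@ltI N) (enum 'I_N).
  by move: (iota_ltn_sorted 0 N); rewrite -val_enum_ord sorted_map.
have := @up_seq N b c hc b1 a _ Ss; rewrite size_enum_ord => /(_ (leqnn _) a1) [[t [St szt _ cl]]|[v [w [Sw szw mw]]]].
- left; exists (fun u : 'I_a => nth x0 t u); split.
  + move=> u v uv; apply: (sorted_ltn_nth (@ltI_trans N) x0 St) => //;
      by rewrite inE szt ltn_ord.
  + move=> u v /= uv; apply: cl; try by apply: mem_nth; rewrite szt ltn_ord.
    have Ut : uniq t by apply: (sorted_uniq (@ltI_trans N) (@ltI_irr N)).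
    by rewrite nth_uniq ?szt ?ltn_ord.
- right.
  exists (fun u : 'I_b => if nat_of_ord u == 0 then v else nth v w (nat_of_ord u).-1); split.
  + move=> [u Hu] [u' Hu'] /= uu'.
    have u'0 : (u' == 0) = false by apply/negbTE; rewrite -lt0n; apply: leq_ltn_trans uu'.
    rewrite u'0.
    have u'w : u'.-1 < size w by rewrite szw; move: Hu'; rewrite /=; lia.
    case: eqP => [_|/eqP]; last rewrite -lt0n => u0.
      by case: (mw _ (mem_nth v u'w)).
    apply: (sorted_ltn_nth (@ltI_trans N) v Sw); rewrite ?inE //.
      by move: u'w uu'; lia.
    by move: u0 uu'; lia.
  + move=> [u Hu] [u' Hu'] /=; rewrite /Ssc_edge /= => /orP[]/andP[/eqP u0 /negbTE u'0];
      rewrite u0 u'0 eqxx.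
    * have u'w : u'.-1 < size w by rewrite szw; move: Hu'; rewrite /=; lia.
      by case: (mw _ (mem_nth v u'w)).
    * have u'w : u.-1 < size w by rewrite szw; move: Hu; rewrite /=; lia.
      by rewrite hc.1; case: (mw _ (mem_nth v u'w)).
Qed.
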